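(* There exists an abelian sp-group $G$ whose $p$-components $T_p$ are all finite and such that $G/T$ has torsion-free rank $1$ (hence $G/T$ is strongly co-Hopfian), but neither the torsion subgroup $T$ nor $G$ is strongly co-Hopfian.
   Context: All groups are abelian. $T$ is the torsion subgroup of $G$ and $T_p$ its $p$-primary component. A mixed group $G$ with infinitely many non-zero $T_p$ is an sp-group if it is a pure subgroup of $\prod_p T_p$ containing $\bigoplus_p T_p$. A group is strongly co-Hopfian if for every endomorphism $f$ there is $n\in\mathbb N$ with $f^n(G)=f^{n+1}(G)$. *)

(* Defs.v *)
(* abelian groups are zmodTypes (additive notation). *)
From mathcomp Require Import all_boot all_order all_algebra.
Set Implicit Arguments. Unset Strict Implicit. Unset Printing Implicit Defensive.
Import GRing.Theory.
Local Open Scope ring_scope.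

Section Defs.
Variable G : zmodType.

Definition torsion (x : G) : Prop := exists n : nat, (0 < n)%N /\ x *+ n = 0.

Definition pcomp (p : nat) (x : G) : Prop := exists k : nat, x *+ (p ^ k) = 0.

Definition mixed : Prop :=
  (exists x, torsion x /\ x <> 0) /\ (exists x, ~ torsion x).

Definition inf_many_nonzero_Tp : Prop :=
  forall N : nat, exists p : nat, [/\ prime p, (N < p)%N & exists x, x <> 0 /\ pcomp p x].

Definition all_Tp_finite : Prop :=
  forall p : nat, prime p -> exists s : seq G, forall x, pcomp p x -> x \in s.

(* elements of prod_p T_p, represented as functions nat -> G, supported on
   primes, whose p-th coordinate lies in T_p; operations are pointwise *)
Definition in_prodT (y : nat -> G) : Prop :=
  forall p : nat, (prime p -> pcomp p (y p)) /\ (~~ prime p -> y p = 0).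

(* finitely supported elements: the direct sum (+)_p T_p *)
Definition in_sumT (y : nat -> G) : Prop :=
  in_prodT y /\ exists N : nat, forall p, (N <= p)%N -> y p = 0.

(* G is an sp-group: mixed, infinitely many nonzero T_p, and (up to the
   embedding phi) a pure subgroup of prod_p T_p containing (+)_p T_p *)
Definition sp_group : Prop :=
  mixed /\ inf_many_nonzero_Tp /\
  exists phi : G -> nat -> G,
    [/\ forall x y, phi (x + y) = (fun p => phi x p + phi y p),
        injective phi,
        forall x, in_prodT (phi x),
        (* purity of phi(G) in prod_p T_p *)
        (forall (x : G) (n : nat) (y : nat -> G), (0 < n)%N -> in_prodT y ->
            (forall p, y p *+ n = phi x p) ->
            exists z : G, forall p, phi z p *+ n = phi x p) &
        (forall y, in_sumT y -> exists x, phi x = y)].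

(* G/T has torsion-free rank 1 (G/T is torsion-free, so its rank is the
   maximal number of Z-independent elements of G modulo T) *)
Definition GmodT_rank1 : Prop :=
  (exists x : G, ~ torsion x) /\
  forall x y : G, exists m n : int, (m != 0 \/ n != 0) /\ torsion (x *~ m + y *~ n).

(* The subgroup S of G is strongly co-Hopfian: every endomorphism f of S
   (given as a map G -> G that is additive on S and maps S into S) satisfies
   f^n(S) = f^(n+1)(S) for some n. *)
Definition strongly_coHopfian_sub (S : G -> Prop) : Prop :=
  forall f : G -> G,
    (forall x, S x -> S (f x)) ->
    (forall x y, S x -> S y -> f (x + y) = f x + f y) ->
    exists n : nat, forall y : G,
      (exists x, S x /\ y = iter n f x) <-> (exists x, S x /\ y = iter n.+1 f x).

Definition strongly_coHopfian : Prop := strongly_coHopfian_sub (fun _ => True).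

End Defs.

(* Main.v *)
Require Import Defs.
From HB Require Import structures.
From mathcomp Require Import all_boot all_order all_algebra.
From mathcomp Require Import boolp ring zify.
Set Implicit Arguments. Unset Strict Implicit. Unset Printing Implicit Defensive.
Import GRing.Theory Num.Theory.
Local Open Scope ring_scope.

Definition Mn (p : nat) : nat := if prime p then (p ^ p)%N else 1%N.
Definition M (p : nat) : int := (Mn p)%:Z.
Definition vv (p : nat) : int := if prime p then (p ^ p.-1)%N%:Z else 0.

Lemma Mn_gt0 p : (0 < Mn p)%N.
Proof. rewrite /Mn; case: ifP => // pp; rewrite expn_gt0 prime_gt0 //. Qed.
Lemma M_neq0 p : M p != 0.
Proof. by rewrite /M eqz_nat -lt0n Mn_gt0. Qed.
Lemma M_gt0 p : 0 < M p.
Proof. by rewrite /M ltz_nat Mn_gt0. Qed.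

Lemma modE d a b : (a %% d = b %% d)%Z <-> (d %| a - b)%Z.
Proof. by rewrite -eqz_mod_dvd; split => [->|/eqP]. Qed.

Definition memG (f : nat -> int) : Prop :=
  (forall p, f p = (f p %% M p)%Z) /\
  exists n : nat, exists m : int, exists N : nat, (0 < n)%N /\
    forall p, (N <= p)%N -> ((n%:Z * f p) %% M p = (m * vv p) %% M p)%Z.

Record GT := MkG { gval : nat -> int; gprop : memG gval }.

Lemma GT_ext (x y : GT) : (forall p, gval x p = gval y p) -> x = y.
Proof.
case: x y => [f fP] [g gP] /= H. have E : f = g by apply: funext.
subst g. by rewrite (Prop_irrelevance fP gP).
Qed.

HB.instance Definition _ := gen_eqMixin GT.
HB.instance Definition _ := gen_choiceMixin GT.

Lemma memG0 : memG (fun _ => 0).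
Proof.
split=> [p|]; first by rewrite mod0z.
by exists 1%N, 0, 0%N; split => // p _; rewrite mulr0 mul0r.
Qed.
Definition zeroG := MkG memG0.

Lemma memG_opp (x : GT) : memG (fun p => (- gval x p) %% M p)%Z.
Proof.
case: x => f [fn [n [m [N [n0 H]]]]] /=; split=> [p|]; first by rewrite modz_mod.
exists n, (-m), N; split => // p /H /modE Hp /=.
rewrite modzMmr. apply/modE. rewrite mulrN mulNr -opprD. by rewrite rpredN.
Qed.
Definition oppG x := MkG (memG_opp x).

Lemma memG_add (x y : GT) : memG (fun p => (gval x p + gval y p) %% M p)%Z.
Proof.
case: x => f [fn [n [m [N [n0 H]]]]]; case: y => g [gn [n' [m' [N' [n0' H']]]]] /=.
split=> [p|]; first by rewrite modz_mod.
exists (n * n')%N, (n'%:Z * m + n%:Z * m'), (maxn N N'); split; first by rewrite muln_gt0 n0.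
move=> p; rewrite geq_max => /andP [/H /modE Hp /H' /modE Hp'] /=.
rewrite modzMmr; apply/modE.
have -> : (n * n')%N%:Z * (f p + g p) - (n'%:Z * m + n%:Z * m') * vv p =
   n'%:Z * (n%:Z * f p - m * vv p) + n%:Z * (n'%:Z * g p - m' * vv p).
  by rewrite PoszM; ring.
by rewrite rpredD // dvdz_mull.
Qed.
Definition addG x y := MkG (memG_add x y).

Lemma addGA : associative addG.
Proof. move=> x y z; apply: GT_ext => p /=. by rewrite modzDml modzDmr addrA. Qed.
Lemma addGC : commutative addG.
Proof. move=> x y; apply: GT_ext => p /=. by rewrite addrC. Qed.
Lemma add0G : left_id zeroG addG.
Proof. move=> x; apply: GT_ext => p /=. rewrite add0r. by case: x => f [fn _] /=. Qed.
Lemma addNG : left_inverse zeroG oppG addG.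
Proof. move=> x; apply: GT_ext => p /=. by rewrite modzDml addNr mod0z. Qed.

HB.instance Definition _ := GRing.isZmodule.Build GT addGA addGC add0G addNG.

Lemma val_add (x y : GT) p : gval (x + y) p = ((gval x p + gval y p) %% M p)%Z.
Proof. by []. Qed.
Lemma val_opp (x : GT) p : gval (- x) p = ((- gval x p) %% M p)%Z.
Proof. by []. Qed.
Lemma val0 p : gval (0 : GT) p = 0.
Proof. by []. Qed.
Lemma valN (x : GT) p : gval x p = (gval x p %% M p)%Z.
Proof. exact: (gprop x).1. Qed.
Lemma val_ge0 (x : GT) p : 0 <= gval x p.
Proof. by rewrite valN modz_ge0 // M_neq0. Qed.
Lemma val_lt (x : GT) p : gval x p < M p.
Proof. by rewrite valN ltz_pmod // M_gt0. Qed.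

Lemma val_muln (x : GT) n p : gval (x *+ n) p = ((n%:Z * gval x p) %% M p)%Z.
Proof.
elim: n => [|n IH]; first by rewrite mulr0n mul0r mod0z.
by rewrite mulrS val_add IH modzDmr -[n.+1]addn1 PoszD mulrDl mul1r addrC.
Qed.
Lemma val_mulz (x : GT) (z : int) p : gval (x *~ z) p = ((z * gval x p) %% M p)%Z.
Proof.
case: z => n; first by rewrite -pmulrn val_muln.
by rewrite NegzE mulrNz val_opp -pmulrn val_muln modzNm mulNr.
Qed.

Lemma memG_single p (i : int) :
  memG (fun q => if q == p then (i %% M p)%Z else 0).
Proof.
split=> [q|]; first by case: eqP => [->|_]; rewrite ?modz_mod ?mod0z.
exists 1%N, 0, p.+1; split => // q hq.
have /negbTE -> : q != p by rewrite neq_ltn hq orbT.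
by rewrite mulr0 mul0r mod0z.
Qed.
Definition single p i := MkG (memG_single p i).
Lemma val_single p i q : gval (single p i) q = if q == p then (i %% M p)%Z else 0.
Proof. by []. Qed.

Lemma support p q k (a : int) : prime p -> q != p -> 0 <= a -> a < M q ->
  (((p ^ k)%N%:Z * a) %% M q)%Z = 0 -> a = 0.
Proof.
move=> pp qp a0; rewrite /M /Mn; case: ifP => qpr; last by move=> a1 _; lia.
case: a a0 => [n|n] // _; rewrite ltz_nat -PoszM modz_nat => hn /eqP.
rewrite eqz_nat => /eqP h.
have d : (q ^ q %| p ^ k * n)%N by rewrite /dvdn h.
rewrite Gauss_dvdr in d; last first.
  by apply: coprimeXl; apply: coprimeXr; rewrite prime_coprime // dvdn_prime2.
case: n hn d {h} => // n hn d; have := dvdn_leq (ltn0Sn n) d; by rewrite leqNgt hn.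
Qed.

Lemma single_tor p i : prime p -> (single p i) *+ (p ^ p) = 0.
Proof.
move=> pp; apply: GT_ext => q; rewrite val_muln val_single val0.
case: eqP => [->|_]; last by rewrite mulr0 mod0z.
by rewrite /M /Mn pp modzMmr mulrC modzMl.
Qed.

Lemma single_nonprime p i : ~~ prime p -> single p i = 0.
Proof.
move=> pp; apply: GT_ext => q; rewrite val_single val0.
case: eqP => // _; rewrite /M /Mn (negbTE pp); exact: modz1.
Qed.

Lemma pcomp_supp p (x : GT) : prime p -> Defs.pcomp p x -> forall q, q != p -> gval x q = 0.
Proof.
move=> pp [k hk] q qp; move: hk => /(congr1 (fun y : GT => gval y q)); rewrite val_muln val0 => h.
exact: (support pp qp (val_ge0 x q) (val_lt x q) h).
Qed.

Lemma pcomp_single p (x : GT) : prime p -> Defs.pcomp p x -> x = single p (gval x p).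
Proof.
move=> pp hx; apply: GT_ext => q; rewrite val_single.
case: eqP => [->|/eqP qp]; [by rewrite -valN | exact: (pcomp_supp pp hx)].
Qed.

Lemma memG_v : memG vv.
Proof.
split=> [p|]; last by exists 1%N, 1, 0%N.
rewrite /vv /M /Mn; case: ifP => pp; last by rewrite mod0z.
rewrite modz_nat modn_small // ltn_exp2l ?prime_gt1 //.
by rewrite prednK ?prime_gt0.
Qed.
Definition vG := MkG memG_v.

Lemma vG_notor : ~ torsion vG.
Proof.
move=> [n [n0 h]]; have [p np pp] := prime_above n.
move: h => /(congr1 (fun y : GT => gval y p)); rewrite val_muln val0 /= /vv /M /Mn pp.
rewrite -PoszM modz_nat => /eqP; rewrite eqz_nat => /eqP.
have e : (p ^ p = p * p ^ p.-1)%N by rewrite -expnS prednK // prime_gt0.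
rewrite e -muln_modl modn_small //.
move/eqP; rewrite muln_eq0 expn_eq0 => /orP [/eqP n00|/andP [/eqP p00 _]].
  by rewrite n00 in n0.
by rewrite p00 in pp.
Qed.

Lemma single_ne0 p : prime p -> single p 1 <> 0.
Proof.
move=> pp /(congr1 (fun y : GT => gval y p)); rewrite val_single eqxx val0 /M /Mn pp.
rewrite modz_small //; apply/andP; split => //; rewrite ltz_nat.
exact: ltn_trans (prime_gt1 pp) (ltn_expl p (prime_gt1 pp)).
Qed.

Definition phi (x : GT) : nat -> GT := fun p => single p (gval x p).

Lemma GT_sp : sp_group GT.
Proof.
split; [split|split].
- exists (single 2 1); split; last exact: single_ne0.
  exists (2 ^ 2)%N; split => //; exact: single_tor.
- exists vG; exact: vG_notor.
- move=> N; have [p Np pp] := prime_above N; exists p; split => //.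
  exists (single p 1); split; first exact: single_ne0.
  by exists p; exact: single_tor.
exists phi; split.
- move=> x y; apply: funext => p; apply: GT_ext => q.
  rewrite val_add !val_single; case: eqP => [->|_]; last by rewrite addr0 mod0z.
  by rewrite val_add modz_mod -!valN.
- move=> x y h; apply: GT_ext => p.
  have := congr1 (fun f => gval (f p) p) h; rewrite /phi /= eqxx.
  by rewrite -!valN.
- move=> x p; split; first by move=> pp; exists p; exact: single_tor.
  by move=> pp; exact: single_nonprime.
- move=> x n y n0 hy hyy.
  have mz : memG (fun p => gval (y p) p).
    split=> [p|]; first exact: valN.
    have [_ [n' [m [N [n0' Hx]]]]] := gprop x.
    exists (n * n')%N, m, N; split; first by rewrite muln_gt0 n0.
    move=> p hp; move: (Hx p hp) => /modE h1.
    have := congr1 (fun y : GT => gval y p) (hyy p).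
    rewrite val_muln val_single eqxx => /modE h2.
    apply/modE.
    have -> : (n * n')%N%:Z * gval (y p) p - m * vv p =
      n'%:Z * (n%:Z * gval (y p) p - gval x p) + (n'%:Z * gval x p - m * vv p).
      by rewrite PoszM; ring.
    by rewrite rpredD // dvdz_mull.
  exists (MkG mz) => p; apply: GT_ext => q.
  rewrite val_muln !val_single; case: eqP => [->|_]; last by rewrite mulr0 mod0z.
  rewrite /= modzMmr.
  have := congr1 (fun y : GT => gval y p) (hyy p).
  by rewrite val_muln val_single eqxx.
- move=> y [hy [N hN]].
  have mz : memG (fun p => gval (y p) p).
    split=> [p|]; first exact: valN.
    exists 1%N, 0, N; split => // p hp.
    by rewrite hN // val0 mulr0 mul0r.
  exists (MkG mz); apply: funext => p; case: (boolP (prime p)) => pp.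
    apply: GT_ext => q; rewrite /phi val_single; case: eqP => [->|/eqP qp].
      by rewrite /= -valN.
    by symmetry; apply: (pcomp_supp pp _ qp); exact: (hy p).1 pp.
  by rewrite (hy p).2 // /phi single_nonprime.
Qed.

Lemma GT_fin : all_Tp_finite GT.
Proof.
move=> p pp.
exists (map (fun i : nat => single p i%:Z) (iota 0 (Mn p))) => x hx.
rewrite (pcomp_single pp hx).
have := val_ge0 x p; have := val_lt x p.
case: (gval x p) => n //; rewrite ltz_nat => hn _.
by apply/mapP; exists n => //; rewrite mem_iota.
Qed.

Fixpoint PP N := match N with 0 => 1%N | k.+1 => (Mn k * PP k)%N end.
Lemma PP_dvd p N : (p < N)%N -> (Mn p %| PP N)%N.
Proof.
elim: N => // N IH; rewrite ltnS leq_eqVlt => /orP [/eqP ->|/IH h] /=.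
  exact: dvdn_mulr. exact: dvdn_mull.
Qed.
Lemma PP_gt0 N : (0 < PP N)%N.
Proof. by elim: N => //= N IH; rewrite muln_gt0 Mn_gt0. Qed.

Lemma tor_crit (w : GT) c N : (0 < c)%N ->
  (forall p, (N <= p)%N -> ((c%:Z * gval w p) %% M p)%Z = 0) -> torsion w.
Proof.
move=> c0 hN; exists (c * PP N)%N; split; first by rewrite muln_gt0 c0 PP_gt0.
apply: GT_ext => p; rewrite val_muln val0; apply/dvdz_mod0P.
case: (leqP N p) => h.
  rewrite PoszM mulrAC; apply: dvdz_mulr; apply/dvdz_mod0P; exact: hN.
rewrite PoszM; apply: dvdz_mulr; apply: dvdz_mull; rewrite dvdzE /=; exact: PP_dvd.
Qed.

Lemma GT_rank1 : GmodT_rank1 GT.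
Proof.
split; first by exists vG; exact: vG_notor.
move=> x y.
have [_ [n1 [m1 [N1 [n10 H1]]]]] := gprop x.
have [_ [n2 [m2 [N2 [n20 H2]]]]] := gprop y.
case: (eqVneq m2 0) => [m20|m2n].
  exists 0, 1; split; first by right.
  rewrite mulr0z add0r mulr1z.
  apply: (tor_crit (c:=n2) (N:=N2)) => // p hp.
  by rewrite H2 // m20 mul0r mod0z.
exists (n1%:Z * m2), (- (n2%:Z * m1)); split.
  by left; rewrite mulf_neq0 // eqz_nat -lt0n.
apply: (tor_crit (c:=1) (N:=maxn N1 N2)) => // p.
rewrite geq_max => /andP [hp1 hp2].
move: (H1 p hp1) => /modE h1; move: (H2 p hp2) => /modE h2.
rewrite mul1r val_add !val_mulz modz_mod modzDml modzDmr; apply/dvdz_mod0P.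
have -> : n1%:Z * m2 * gval x p + - (n2%:Z * m1) * gval y p =
  m2 * (n1%:Z * gval x p - m1 * vv p) - m1 * (n2%:Z * gval y p - m2 * vv p) by ring.
by rewrite rpredB // dvdz_mull.
Qed.

Lemma M_dvd_pv p : (M p %| p%:Z * vv p)%Z.
Proof.
rewrite /M /vv /Mn; case: ifP => pp; last by rewrite dvdzE /= dvd1n.
by rewrite -PoszM dvdzE /= -expnS prednK ?prime_gt0.
Qed.

Lemma memG_f (x : GT) : memG (fun p => (p%:Z * gval x p) %% M p)%Z.
Proof.
have [_ [n [m [N [n0 H]]]]] := gprop x.
split=> [p|]; first by rewrite modz_mod.
exists n, 0, N; split => // p hp; move: (H p hp) => /modE h.
rewrite /= modzMmr mul0r mod0z; apply/dvdz_mod0P.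
have -> : n%:Z * (p%:Z * gval x p) = p%:Z * (n%:Z * gval x p - m * vv p) + m * (p%:Z * vv p)
  by ring.
by rewrite rpredD // dvdz_mull // M_dvd_pv.
Qed.
Definition fG x := MkG (memG_f x).

Lemma val_iter j x p : gval (iter j fG x) p = (((p ^ j)%N%:Z * gval x p) %% M p)%Z.
Proof.
elim: j => [|j IH]; first by rewrite mul1r -valN.
by rewrite /= IH modzMmr mulrA -PoszM -expnS.
Qed.

Lemma fG_add x y : fG (x + y) = fG x + fG y.
Proof.
apply: GT_ext => p; rewrite val_add /= modzMmr modzDml modzDmr mulrDr.
by [].
Qed.

Lemma fG_tor x : torsion x -> torsion (fG x).
Proof.
move=> [n [n0 h]]; exists n; split => //; apply: GT_ext => p.
have := congr1 (fun y : GT => gval y p) h; rewrite val_muln val0 => h'.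
by rewrite val_muln /= modzMmr mulrCA -modzMmr h' mulr0 mod0z.
Qed.

Lemma nostab n : exists t : GT, torsion t /\ forall x, iter n fG t <> iter n.+1 fG x.
Proof.
have [p np pp] := prime_above n.
exists (single p 1); split.
  exists (p ^ p)%N; split; [by rewrite expn_gt0 prime_gt0 | exact: single_tor].
move=> x /(congr1 (fun y : GT => gval y p)); rewrite !val_iter val_single eqxx.
have p1 := prime_gt1 pp.
rewrite /M /Mn pp (modz_small (m := 1)); last first.
  by rewrite /= ltz_nat (ltn_trans p1 (ltn_expl p p1)).
rewrite mulr1 modz_nat modn_small; last by rewrite ltn_exp2l.
move=> e; have : ((p ^ p)%N%:Z %| (p ^ n)%N%:Z - (p ^ n.+1)%N%:Z * gval x p)%Z.
  by apply/modE; rewrite -e modz_nat modn_small // ltn_exp2l.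
have d1 : ((p ^ n.+1)%N%:Z %| (p ^ p)%N%:Z)%Z by rewrite dvdzE /= dvdn_exp2l.
move=> /(dvdz_trans d1) d2.
have : ((p ^ n.+1)%N%:Z %| (p ^ n)%N%:Z)%Z.
  have -> : (p ^ n)%N%:Z = ((p ^ n)%N%:Z - (p ^ n.+1)%N%:Z * gval x p) +
     (p ^ n.+1)%N%:Z * gval x p by ring.
  by rewrite rpredD // dvdz_mulr.
rewrite dvdzE /= => /dvdn_leq; rewrite expn_gt0 ltnW // => /(_ isT).
by rewrite leqNgt ltn_exp2l // ltnSn.
Qed.

Lemma GT_notT : ~ strongly_coHopfian_sub (@torsion GT).
Proof.
move=> H; have [n Hn] := H fG fG_tor (fun x y _ _ => fG_add x y).
have [t [tt nt]] := nostab n.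
have : exists x, torsion x /\ iter n fG t = iter n fG x by exists t.
by move/Hn => [x [_ e]]; exact: nt x e.
Qed.

Lemma GT_notG : ~ strongly_coHopfian GT.
Proof.
move=> H; have [n Hn] := H fG (fun _ _ => I) (fun x y _ _ => fG_add x y).
have [t [tt nt]] := nostab n.
have : exists x, True /\ iter n fG t = iter n fG x by exists t.
by move/Hn => [x [_ e]]; exact: nt x e.
Qed.

Theorem mainTheorem17 :
  exists G : zmodType,
    [/\ sp_group G,
        all_Tp_finite G,
        GmodT_rank1 G,
        ~ strongly_coHopfian_sub (@torsion G) &
        ~ strongly_coHopfian G].
Proof.
exists GT; split; [exact: GT_sp | exact: GT_fin | exact: GT_rank1 | exact: GT_notT | exact: GT_notG].
Qed.
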